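(* Let $F$ be a Banach lattice and $\tau$ a uniformly exhaustive linear topology on $F$ weaker than the norm topology. (i) If $E\subset F$ is a closed subspace on which $\tau$ agrees with the norm topology, then $E$ is $n$-dispersed for some $n\in\mathbb{N}$. (ii) If a bounded operator $T:F\to H$ into a Banach space complements $\tau$, then $T$ is $n$-DNS for some $n\in\mathbb{N}$.
   Context: $\tau$ is uniformly exhaustive if for every $\tau$-neighborhood $U$ of $0$ there is $n$ such that there is no pairwise disjoint ($|f|\wedge|g|=0$) $n$-tuple of elements all outside $U$. $T$ complements $\tau$ if no net $(f_p)$ in the unit sphere $\mathrm{S}_F$ is $\tau$-null with $\|Tf_p\|\to0$. For $n\ge2$, $T$ is $n$-DNS if there is $r>0$ such that no pairwise disjoint $f_1,\dots,f_n\in\mathrm{S}_F$ satisfy $\|Tf_k\|\le r$ for all $k$; $E$ is $n$-dispersed if there is $r>0$ such that no pairwise disjoint $f_1,\dots,f_n\in\mathrm{S}_F$ satisfy $d(f_k,E)<r$ for all $k$. *)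

(* Defs.v *)
From HB Require Import structures.
From mathcomp Require Import all_boot all_order all_algebra.
From mathcomp Require Import all_classical all_reals all_analysis.
Set Implicit Arguments. Unset Strict Implicit. Unset Printing Implicit Defensive.
Import Order.TTheory GRing.Theory Num.Theory.
Import numFieldNormedType.Exports.
Local Open Scope classical_set_scope.
Local Open Scope ring_scope.

Section Defs.
Variable R : realType.

Section Lattice.
Variable F : normedModType R.
Variable le : F -> F -> Prop.

Definition is_sup (x y s : F) : Prop :=
  le x s /\ le y s /\ (forall u, le x u -> le y u -> le s u).
Definition is_inf (x y m : F) : Prop :=
  le m x /\ le m y /\ (forall u, le u x -> le u y -> le u m).
Definition is_abs (x a : F) : Prop := is_sup x (- x) a.

(* le makes F a (real) Banach lattice: F is a complete normed space
   (given by its type), le is a vector lattice order and the norm is a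
   lattice norm. *)
Definition banach_lattice_order : Prop :=
  (forall x, le x x) /\
  (forall x y, le x y -> le y x -> x = y) /\
  (forall x y z, le x y -> le y z -> le x z) /\
  (forall x y z, le x y -> le (x + z) (y + z)) /\
  (forall (a : R) x y, 0 <= a -> le x y -> le (a *: x) (a *: y)) /\
  (forall x y, exists s, is_sup x y s) /\
  (forall x y a b, is_abs x a -> is_abs y b -> le a b -> `|x| <= `|y|).

Definition ldisjoint (f g : F) : Prop :=
  exists a b, is_abs f a /\ is_abs g b /\ is_inf a b 0.

Definition pairwise_disjoint (n : nat) (f : 'I_n -> F) : Prop :=
  forall i j : 'I_n, i != j -> ldisjoint (f i) (f j).
End Lattice.

Section LinTop.
Variable F : normedModType R.
Variable tau : set (set F).  (* the tau-open sets *)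

Definition tnbhs (x : F) (U : set F) : Prop :=
  exists V, tau V /\ V x /\ V `<=` U.

Definition is_topology : Prop :=
  [/\ tau setT,
      (forall (I : Type) (A : I -> set F), (forall i, tau (A i)) ->
          tau (\bigcup_(i in setT) A i)) &
      (forall A B, tau A -> tau B -> tau (A `&` B))].

Definition linear_topology : Prop :=
  [/\ is_topology,
      (forall x y U, tnbhs (x + y) U -> exists V W,
          [/\ tnbhs x V, tnbhs y W & forall a b, V a -> W b -> U (a + b)]) &
      (forall (k : R) x U, tnbhs (k *: x) U -> exists e : R, exists V,
          [/\ 0 < e, tnbhs x V &
              forall (l : R) a, `|l - k| < e -> V a -> U (l *: a)])].

Definition weaker_than_norm : Prop := forall A, tau A -> open A.

Variable le : F -> F -> Prop.
Definition uniformly_exhaustive : Prop :=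
  forall U, tnbhs 0 U -> exists n : nat,
    ~ (exists f : 'I_n -> F, pairwise_disjoint le f /\ forall i, ~ U (f i)).

Definition agrees_on (E : set F) : Prop :=
  (forall A, open A -> exists B, tau B /\ A `&` E = B `&` E) /\
  (forall B, tau B -> exists A, open A /\ A `&` E = B `&` E).

Definition directed (D : Type) (dle : D -> D -> Prop) : Prop :=
  [/\ (exists d : D, True), (forall d, dle d d),
      (forall a b c, dle a b -> dle b c -> dle a c) &
      (forall a b, exists c, dle a c /\ dle b c)].

Definition eventually (D : Type) (dle : D -> D -> Prop) (P : D -> Prop) :=
  exists p0, forall p, dle p0 p -> P p.

Definition tau_null (D : Type) (dle : D -> D -> Prop) (f : D -> F) : Prop :=
  forall U, tnbhs 0 U -> eventually dle (fun p => U (f p)).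

Definition complements (H : normedModType R) (T : F -> H) : Prop :=
  forall (D : Type) (dle : D -> D -> Prop) (f : D -> F),
    directed dle ->
    ~ [/\ (forall p, `|f p| = 1), tau_null dle f &
          (forall e : R, 0 < e -> eventually dle (fun p => `|T (f p)| < e))].
End LinTop.

Section Disp.
Variable F : normedModType R.
Variable le : F -> F -> Prop.

Definition closed_subspace (E : set F) : Prop :=
  [/\ closed E, E 0, (forall x y, E x -> E y -> E (x + y)) &
      (forall (a : R) x, E x -> E (a *: x))].

Definition n_dispersed (n : nat) (E : set F) : Prop :=
  exists r : R, 0 < r /\
    ~ (exists f : 'I_n -> F, [/\ pairwise_disjoint le f,
          (forall k, `|f k| = 1) &
          (forall k, exists e, E e /\ `|f k - e| < r)]).

Definition n_DNS (H : normedModType R) (n : nat) (T : F -> H) : Prop :=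
  exists r : R, 0 < r /\
    ~ (exists f : 'I_n -> F, [/\ pairwise_disjoint le f,
          (forall k, `|f k| = 1) &
          (forall k, `|T (f k)| <= r)]).
End Disp.
End Defs.

(* Main.v *)
Require Import Defs.
From HB Require Import structures.
From mathcomp Require Import all_boot all_order all_algebra.
From mathcomp Require Import all_classical all_reals all_analysis.
From mathcomp Require Import lra.
Import Order.TTheory GRing.Theory Num.Theory.
Import numFieldNormedType.Exports.
Local Open Scope classical_set_scope.
Local Open Scope ring_scope.

Lemma open_ball0 (R : realType) (F : normedModType R) (A : set F) :
  open A -> A 0 -> exists2 d : R, 0 < d & forall y : F, `|y| < d -> A y.
Proof.
move=> oA A0.
have : nbhs 0 A by apply: open_nbhs_nbhs; split.
move/nbhs_ballP=> [d d0 H]; exists d => // y yd; apply: H.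
by rewrite -ball_normE /ball_ /= sub0r normrN.
Qed.

Lemma ballE0 (R : realType) (F : normedModType R) (e : R) (y : F) :
  ball (0:F) e y <-> `|y| < e.
Proof. by rewrite -ball_normE /ball_ /= sub0r normrN. Qed.

Lemma key (R : realType) (F : normedModType R) (le : F -> F -> Prop)
  (tau : set (set F)) (U : set F) :
  uniformly_exhaustive tau le -> tnbhs tau 0 U ->
  exists n : nat, (2 <= n)%N /\
    ~ (exists f : 'I_n -> F, pairwise_disjoint le f /\ forall i, ~ U (f i)).
Proof.
move=> ue /ue [n Hn]; exists (maxn n 2); split; first by rewrite leq_maxr.
move=> [g [pg ng]]; apply: Hn.
have h : (n <= maxn n 2)%N by rewrite leq_maxl.
exists (fun i => g (widen_ord h i)); split => // i j ij.
by apply: pg; apply: contra ij => /eqP [] /val_inj ->.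
Qed.

Theorem mainTheorem13 (R : realType) (F : completeNormedModType R)
  (le : F -> F -> Prop) (tau : set (set F)) :
  banach_lattice_order le ->
  linear_topology tau ->
  uniformly_exhaustive tau le ->
  weaker_than_norm tau ->
  (forall E : set F, closed_subspace E -> agrees_on tau E ->
     exists n : nat, (2 <= n)%N /\ n_dispersed le n E) /\
  (forall (H : completeNormedModType R) (T : {linear F -> H}),
     continuous T -> complements tau T ->
     exists n : nat, (2 <= n)%N /\ n_DNS le n T).
Proof.
move=> _ [[tT tU tI] tadd _] ue wk; split.
- move=> E [_ E0 _ _] [ag _].
  have [B [tB BE]] := ag _ (ball_open (0:F) (1/2)).
  have B0 : B 0.
    have : (ball (0:F) (1/2) `&` E) 0.
      split => //; apply/ballE0; rewrite normr0; lra.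
    by rewrite BE => -[].
  have nB : tnbhs tau (0 + 0) B by rewrite addr0; exists B; split; last split.
  have [V [W [nV [W' [tW' [W'0 W'W]]] VW]]] := tadd _ _ _ nB.
  have [d d0 dW] := @open_ball0 R F W' (wk _ tW') W'0.
  have [n [n2 Hn]] := @key R F le tau V ue nV.
  exists n; split => //; exists (Num.min d (1/2)); split.
    by rewrite lt_min d0 /=; lra.
  move=> [f [pf nf df]]; apply: Hn; exists f; split => // i Vf.
  have [e [Ee fe]] := df i.
  have Be : B e.
    have -> : e = f i + (e - f i) by rewrite addrC subrK.
    apply: VW => //; apply: W'W; apply: dW.
    rewrite -normrN opprB; apply: lt_le_trans fe _; by rewrite ge_min lexx.
  have : (B `&` E) e by [].
  rewrite -BE => -[/ballE0 eh _].
  have : `|f i - e| < 1/2 by apply: lt_le_trans fe _; by rewrite ge_min lexx orbT.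
  have : `|f i| <= `|e| + `|f i - e|.
    by rewrite -[X in `|X|](subrK e (f i)) addrC ler_normD.
  rewrite nf; lra.
- move=> H T _ cT.
  have [U [r [nU r0 hU]]] : exists U (r : R), [/\ tnbhs tau 0 U, 0 < r &
      forall f, `|f| = 1 -> `|T f| <= r -> ~ U f].
    apply: contrapT => hn.
    pose D := {p : set F * R | tnbhs tau 0 p.1 /\ 0 < p.2}.
    pose dle (a b : D) := (sval b).1 `<=` (sval a).1 /\ (sval b).2 <= (sval a).2.
    have hf : forall p : D, exists f : F,
        [/\ `|f| = 1, `|T f| <= (sval p).2 & (sval p).1 f].
      move=> [[U0 r1] [nU0 r10]] /=; apply: contrapT => hf'.
      apply: hn; exists U0, r1; split => // f f1 fr Uf; apply: hf'.
      by exists f; split.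
    have [g hg] := choice hf.
    have tT' : tnbhs tau 0 setT by exists setT; split; last split.
    apply: (cT D dle g); split.
    + by exists (exist _ (setT, 1) (conj tT' ltr01) : D).
    + by move=> d; split.
    + move=> a b c [ab1 ab2] [bc1 bc2]; split.
        by move=> x /bc1 /ab1.
      exact: le_trans bc2 ab2.
    + move=> [[U1 r1] [n1 r10]] [[U2 r2] [n2 r20]].
      have n12 : tnbhs tau 0 (U1 `&` U2).
        move: n1 n2 => [V1 [t1 [v1 s1]]] [V2 [t2 [v2 s2]]].
        exists (V1 `&` V2); split; first exact: tI.
        split => // x [/s1 ? /s2 ?]; by split.
      have r12 : 0 < Num.min r1 r2 by rewrite lt_min r10 r20.
      apply: (ex_intro _ (exist _ (U1 `&` U2, Num.min r1 r2) (conj n12 r12) : D)).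
      split; split => /=.
      * by move=> x [].
      * by rewrite ge_min lexx.
      * by move=> x [].
      * by rewrite ge_min lexx orbT.
    + by move=> p; case: (hg p).
    + move=> U0 nU0.
      apply: (ex_intro _ (exist _ (U0, 1) (conj nU0 ltr01) : D)) => p [/= pU _].
      by case: (hg p) => _ _ /pU.
    + move=> e e0.
      have e20 : 0 < e / 2 by rewrite divr_gt0.
      apply: (ex_intro _ (exist _ (setT, e / 2) (conj tT' e20) : D)) => p [_ /= pe].
      case: (hg p) => _ Tg _.
      apply: le_lt_trans Tg _; apply: le_lt_trans pe _; lra.
  have [n [n2 Hn]] := @key R F le tau U ue nU.
  exists n; split => //; exists r; split => //.
  move=> [f [pf nf Tf]]; apply: Hn; exists f; split => // i.
  exact: hU.
Qed.
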